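(* Let $x,y\in\ell^\infty$ with $|L_x|=n$ and $|L_y|=k$ for some integers $n,k\ge 2$. Then there exist $z_1,z_2\in\operatorname{span}\{x,y\}$ with $$|L_{z_1}|=|\mathcal{E}_{x,y}|\quad\text{and}\quad |L_{z_2}|<|\mathcal{E}_{x,y}|,$$ and moreover $$|\mathcal{E}_{x,y}|=\max\{|L_z|: z\in\operatorname{span}\{x,y\}\}.$$
   Context: $\ell^\infty$ is the Banach space of bounded real sequences $x=(x_n)_{n\ge1}$ with the sup norm. For $x\in\ell^\infty$, $L_x$ denotes the (non-empty compact) set of accumulation points of $x$, i.e. the set of $a\in\mathbb{R}$ such that $x_{n_k}\to a$ for some strictly increasing sequence $(n_k)$. For $S\subset\mathbb{N}$, $1_S$ is the indicator sequence of $S$; $x\sim_{c_0}y$ means $x-y$ converges to $0$. If $|L_x|=n<\infty$, one can write $x\sim_{c_0}\xi_11_{S_1}+\dots+\xi_n1_{S_n}$ where $S_1,\dots,S_n$ is a partition of $\mathbb{N}$ into infinite sets and $\xi_1,\dots,\xi_n$ are the distinct accumulation points; similarly $y\sim_{c_0}\eta_11_{T_1}+\dots+\eta_k1_{T_k}$. Then $\mathcal{E}_{x,y}=\{(i,j)\in\{1,\dots,n\}\times\{1,\dots,k\}: S_i\cap T_j\text{ is infinite}\}$ (this does not depend on the choice of the partitions, which are determined up to finite modifications). *)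

(* Defs.v *)
(* real sequences are functions nat -> R (index 0 plays the
   role of index 1 in the paper). *)
From Stdlib Require Import Reals List.
Import ListNotations.
Open Scope R_scope.

Definition in_linf (x : nat -> R) : Prop :=
  exists M : R, forall m : nat, Rabs (x m) <= M.

Definition acc_pt (x : nat -> R) (a : R) : Prop :=
  exists phi : nat -> nat,
    (forall i, (phi i < phi (S i))%nat) /\ Un_cv (fun i => x (phi i)) a.

Definition card_is {A : Type} (P : A -> Prop) (c : nat) : Prop :=
  exists l : list A, NoDup l /\ length l = c /\ (forall a, In a l <-> P a).

Definition infinite_nat (P : nat -> Prop) : Prop :=
  forall N : nat, exists m : nat, (N <= m)%nat /\ P m.

(* A decomposition x ~_{c0} xi_0 1_{S_0} + ... + xi_{n-1} 1_{S_{n-1}}: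
   the partition S_0,...,S_{n-1} of nat into infinite sets is encoded by the
   block-index map blk (m lies in S_{blk m}); the xi_i are the distinct
   accumulation points of x. *)
Definition is_decomp (x : nat -> R) (n : nat) (xi : nat -> R) (blk : nat -> nat)
  : Prop :=
  (forall i j, (i < n)%nat -> (j < n)%nat -> xi i = xi j -> i = j) /\
  (forall i, (i < n)%nat -> acc_pt x (xi i)) /\
  (forall m, (blk m < n)%nat) /\
  (forall i, (i < n)%nat -> infinite_nat (fun m => blk m = i)) /\
  Un_cv (fun m => x m - xi (blk m)) 0.

Definition E_pairs (n k : nat) (S T : nat -> nat) (p : nat * nat) : Prop :=
  (fst p < n)%nat /\ (snd p < k)%nat /\
  infinite_nat (fun m => S m = fst p /\ T m = snd p).

Definition lin2 (a b : R) (x y : nat -> R) : nat -> R :=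
  fun m => a * x m + b * y m.

(* Main.v *)
Require Import Defs.
From Stdlib Require Import Reals List Lia Lra Classical ClassicalEpsilon FunctionalExtensionality.
Import ListNotations.
Open Scope R_scope.

Lemma cv_const (c : R) : Un_cv (fun _ => c) c.
Proof. intros eps He; exists 0%nat; intros; unfold R_dist; rewrite Rminus_diag, Rabs_R0; lra. Qed.

Lemma cv_comb (u v : nat -> R) (a b : R) :
  Un_cv u 0 -> Un_cv v 0 -> Un_cv (fun m => a * u m + b * v m) 0.
Proof.
  intros Hu Hv.
  replace 0 with (a * 0 + b * 0) by ring.
  apply CV_plus; apply CV_mult; auto; apply cv_const.
Qed.

Lemma cv_shift (w : nat -> R) (c : R) : Un_cv (fun m => w m - c) 0 -> Un_cv w c.
Proof.
  intros H eps He; destruct (H eps He) as [N HN]; exists N; intros m Hm.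
  specialize (HN m Hm); unfold R_dist in *; rewrite Rminus_0_r in HN; exact HN.
Qed.

Lemma cv_sub (u : nat -> R) (l : R) (phi : nat -> nat) :
  Un_cv u l -> (forall m, (m <= phi m)%nat) -> Un_cv (fun m => u (phi m)) l.
Proof.
  intros H Hp eps He; destruct (H eps He) as [N HN]; exists N; intros m Hm.
  apply HN; specialize (Hp m); lia.
Qed.

Lemma unif1 (Q : nat -> nat -> Prop) (n : nat) :
  (forall i, (i < n)%nat -> exists N, forall m, (N <= m)%nat -> Q i m) ->
  exists N, forall i m, (i < n)%nat -> (N <= m)%nat -> Q i m.
Proof.
  induction n as [|n IH]; intros H.
  - exists 0%nat; intros; lia.
  - destruct IH as [N1 H1]. { intros i Hi; apply H; lia. }
    destruct (H n ltac:(lia)) as [N2 H2].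
    exists (Nat.max N1 N2); intros i m Hi Hm.
    destruct (Nat.eq_dec i n) as [->|Hne].
    + apply H2; lia.
    + apply H1; lia.
Qed.

Lemma unif2 (Q : nat -> nat -> nat -> Prop) (n k : nat) :
  (forall i j, (i < n)%nat -> (j < k)%nat -> exists N, forall m, (N <= m)%nat -> Q i j m) ->
  exists N, forall i j m, (i < n)%nat -> (j < k)%nat -> (N <= m)%nat -> Q i j m.
Proof.
  intros H.
  destruct (unif1 (fun i m => forall j, (j < k)%nat -> Q i j m) n) as [N HN].
  - intros i Hi.
    destruct (unif1 (fun j m => Q i j m) k) as [N HN].
    + intros j Hj; apply H; auto.
    + exists N; intros m Hm j Hj; apply HN; auto.
  - exists N; intros; apply HN; auto.
Qed.

Lemma min_dist (l : list R) (v : R) : ~ In v l ->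
  exists d, 0 < d /\ forall w, In w l -> d <= Rabs (v - w).
Proof.
  induction l as [|a l IH]; intros Hn.
  - exists 1; split; [lra | intros w []].
  - destruct IH as [d [Hd Hw]]. { intros Hi; apply Hn; right; auto. }
    assert (Ha : v <> a) by (intros ->; apply Hn; left; auto).
    assert (Hp : 0 < Rabs (v - a)) by (apply Rabs_pos_lt; lra).
    exists (Rmin d (Rabs (v - a))); split.
    + apply Rmin_glb_lt; auto.
    + intros w [<-|Hw']. apply Rmin_r. eapply Rle_trans; [apply Rmin_l | auto].
Qed.

Lemma avoid (l : list R) : exists t, ~ In t l.
Proof.
  set (s := fold_right (fun a acc => Rabs a + acc) 0 l).
  assert (Hs : forall w, In w l -> w <= s).
  { unfold s; clear s; induction l as [|a l IH]; intros w Hw; simpl in *.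
    - destruct Hw.
    - assert (0 <= fold_right (fun a acc => Rabs a + acc) 0 l).
      { clear; induction l; simpl; [lra|]. pose proof (Rabs_pos a); lra. }
      destruct Hw as [Hw|Hw].
      + subst; pose proof (Rle_abs w); lra.
      + specialize (IH w Hw); pose proof (Rabs_pos a); lra. }
  exists (s + 1); intros H; specialize (Hs _ H); lra.
Qed.

Lemma two_le_len {A} (l : list A) p q : In p l -> In q l -> p <> q -> (2 <= length l)%nat.
Proof.
  destruct l as [|a [|b l]]; simpl; intros Hp Hq Hn.
  - destruct Hp.
  - destruct Hp as [<-|[]]; destruct Hq as [<-|[]]; congruence.
  - lia.
Qed.

Lemma len_all_eq (l : list R) c : NoDup l -> (forall w, In w l -> w = c) -> (length l <= 1)%nat.
Proof.
  destruct l as [|a [|b l]]; simpl; intros Hd H; try lia.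
  inversion Hd as [|x0 l0 Hni Hd2]; subst. exfalso; apply Hni.
  rewrite (H a (or_introl eq_refl)), (H b (or_intror (or_introl eq_refl))); left; auto.
Qed.

Lemma inf_seq (P : nat -> Prop) : infinite_nat P ->
  exists phi : nat -> nat, (forall i, (phi i < phi (S i))%nat) /\
     (forall i, (i <= phi i)%nat) /\ (forall i, P (phi i)).
Proof.
  intros H.
  assert (g : forall N, {m | (N <= m)%nat /\ P m}).
  { intros N; apply constructive_indefinite_description; auto. }
  set (phi := fix phi i := match i with O => proj1_sig (g O) | S i' => proj1_sig (g (S (phi i'))) end).
  exists phi; split; [|split].
  - intros i; simpl; destruct (proj2_sig (g (S (phi i)))); lia.
  - induction i; simpl; [lia|]. destruct (proj2_sig (g (S (phi i)))); lia.
  - destruct i; simpl; [destruct (proj2_sig (g O))|destruct (proj2_sig (g (S (phi i))))]; auto.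
Qed.

Lemma charac x y n k xi S eta T lE a b :
  is_decomp x n xi S -> is_decomp y k eta T ->
  (forall p, In p lE <-> E_pairs n k S T p) ->
  forall v, acc_pt (lin2 a b x y) v <->
            In v (map (fun p => a * xi (fst p) + b * eta (snd p)) lE).
Proof.
  intros [_ [_ [HSn [_ Hx]]]] [_ [_ [HTk [_ Hy]]]] HE v.
  pose proof (cv_comb _ _ a b Hx Hy) as Hz.
  split.
  - intros [phi [Hphi Hcv]].
    apply NNPP; intros Hn.
    destruct (min_dist _ _ Hn) as [d [Hd Hw]].
    destruct (unif2 (fun i j m => S m = i /\ T m = j -> E_pairs n k S T (i, j)) n k)
      as [N0 HN0].
    { intros i j Hi Hj.
      destruct (classic (infinite_nat (fun m => S m = i /\ T m = j))) as [Hinf|Hfin].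
      - exists 0%nat; intros m _ _; repeat split; auto.
      - unfold infinite_nat in Hfin. apply not_all_ex_not in Hfin as [N HN].
        exists N; intros m Hm Hc; exfalso; apply HN; exists m; auto. }
    destruct (Hz (d/2) ltac:(lra)) as [N1 HN1].
    destruct (Hcv (d/2) ltac:(lra)) as [N2 HN2].
    assert (Hmono : forall i, (i <= phi i)%nat).
    { induction i; [lia|]. specialize (Hphi i); lia. }
    set (m := Nat.max N2 (Nat.max N0 N1)).
    assert (Hm0 : (N0 <= phi m)%nat) by (specialize (Hmono m); unfold m in *; lia).
    assert (Hm1 : (N1 <= phi m)%nat) by (specialize (Hmono m); unfold m in *; lia).
    specialize (HN0 (S (phi m)) (T (phi m)) (phi m) (HSn _) (HTk _) Hm0 (conj eq_refl eq_refl)).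
    apply HE in HN0.
    specialize (Hw _ (in_map (fun p => a * xi (fst p) + b * eta (snd p)) _ _ HN0)).
    specialize (HN1 _ Hm1). specialize (HN2 m ltac:(unfold m; lia)).
    unfold R_dist, lin2 in *; simpl in *.
    rewrite Rminus_0_r in HN1.
    assert (Habs : Rabs (v - (a * xi (S (phi m)) + b * eta (T (phi m)))) < d).
    { replace (v - (a * xi (S (phi m)) + b * eta (T (phi m)))) with
        (- (a * x (phi m) + b * y (phi m) - v) +
         (a * (x (phi m) - xi (S (phi m))) + b * (y (phi m) - eta (T (phi m))))) by ring.
      eapply Rle_lt_trans; [apply Rabs_triang|]. rewrite Rabs_Ropp. lra. }
    lra.
  - intros Hin. apply in_map_iff in Hin as [[i j] [Hv HinE]].
    simpl in Hv; subst v.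
    apply HE in HinE as [_ [_ Hinf]]; simpl in Hinf.
    destruct (inf_seq _ Hinf) as [phi [Hphi [Hmono HP]]].
    exists phi; split; auto.
    apply cv_shift.
    pose proof (cv_sub _ _ phi Hz Hmono) as Hs.
    intros eps He; destruct (Hs eps He) as [N HN]; exists N; intros m Hm.
    specialize (HN m Hm). destruct (HP m) as [H1 H2].
    unfold lin2; rewrite H1, H2 in HN.
    replace (a * x (phi m) + b * y (phi m) - (a * xi i + b * eta j))
      with (a * (x (phi m) - xi i) + b * (y (phi m) - eta j)) by ring.
    exact HN.
Qed.

Theorem lemma2p1 (x y : nat -> R) (n k : nat) :
  in_linf x -> in_linf y ->
  card_is (acc_pt x) n -> card_is (acc_pt y) k ->
  (2 <= n)%nat -> (2 <= k)%nat ->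
  forall (xi : nat -> R) (S : nat -> nat) (eta : nat -> R) (T : nat -> nat)
         (e : nat),
    is_decomp x n xi S -> is_decomp y k eta T ->
    card_is (E_pairs n k S T) e ->
    (exists a1 b1 : R, card_is (acc_pt (lin2 a1 b1 x y)) e) /\
    (exists (a2 b2 : R) (c2 : nat),
        card_is (acc_pt (lin2 a2 b2 x y)) c2 /\ (c2 < e)%nat) /\
    (forall a b : R, exists c : nat,
        card_is (acc_pt (lin2 a b x y)) c /\ (c <= e)%nat).
Proof.
  intros _ _ _ _ Hn Hk xi S eta T e Dx Dy [lE [Hnd [Hlen HE]]].
  pose proof HE as HE'.
  pose proof (charac x y n k xi S eta T lE) as Ch.
  assert (Gen : forall a b, exists c, card_is (acc_pt (lin2 a b x y)) c /\ (c <= e)%nat).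
  { intros a b.
    set (F := map (fun p => a * xi (fst p) + b * eta (snd p)) lE).
    exists (length (nodup Req_dec_T F)); split.
    - exists (nodup Req_dec_T F); split; [apply NoDup_nodup|split; [reflexivity|]].
      intros v; rewrite nodup_In; symmetry; apply Ch; auto.
    - rewrite <- Hlen. replace (length lE) with (length F) by (unfold F; apply length_map).
      apply NoDup_incl_length; [apply NoDup_nodup|]. intros w; rewrite nodup_In; auto. }
  split; [|split; [|exact Gen]].
  - set (bad := flat_map (fun p => map (fun q => (xi (fst p) - xi (fst q)) /
                                        (eta (snd q) - eta (snd p))) lE) lE).
    destruct (avoid bad) as [t Ht].
    exists 1, t, (map (fun p => 1 * xi (fst p) + t * eta (snd p)) lE).
    split; [|split].
    + apply NoDup_map_NoDup_ForallPairs; auto.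
      intros [i j] [i' j'] Hp Hq Heq; simpl in Heq.
      pose proof Hp as Hp'; pose proof Hq as Hq'.
      apply HE' in Hp' as [Hi [Hj _]]; apply HE' in Hq' as [Hi' [Hj' _]]; simpl in *.
      destruct Dx as [Dxi _]; destruct Dy as [Deta _].
      destruct (Req_dec_T (eta j) (eta j')) as [He|He].
      * assert (j = j') by (apply Deta; auto). subst j'.
        assert (xi i = xi i') by lra.
        f_equal; apply Dxi; auto.
      * exfalso; apply Ht. unfold bad. apply in_flat_map. exists (i, j); split; auto.
        apply in_map_iff. exists (i', j'); split; auto. simpl.

        field_simplify_eq; [|intros H; apply He; lra]. lra.
    + rewrite length_map; auto.
    + intros v; symmetry; apply Ch; auto.
  - assert (Hin : forall i, (i < n)%nat -> exists p, In p lE /\ fst p = i).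
    { intros i Hi.
      assert (Ha : acc_pt (lin2 1 0 x y) (xi i)).
      { replace (lin2 1 0 x y) with x.
        - destruct Dx as [_ [Ha _]]; auto.
        - apply functional_extensionality; intros m; unfold lin2; ring. }
      apply (Ch 1 0 Dx Dy HE') in Ha. apply in_map_iff in Ha as [p [Hp Hpl]].
      exists p; split; auto.
      pose proof Hpl as Hpl'; apply HE' in Hpl' as [Hf _].
      destruct Dx as [Dxi _]. apply Dxi; auto. lra. }
    destruct (Hin 0%nat ltac:(lia)) as [p [Hp Hp0]].
    destruct (Hin 1%nat ltac:(lia)) as [q [Hq Hq0]].
    assert (He2 : (2 <= e)%nat).
    { rewrite <- Hlen; apply (two_le_len lE p q); auto. intros ->; congruence. }
    set (F := map (fun p => 0 * xi (fst p) + 0 * eta (snd p)) lE).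
    exists 0, 0, (length (nodup Req_dec_T F)); split.
    + exists (nodup Req_dec_T F); split; [apply NoDup_nodup|split; [reflexivity|]].
      intros v; rewrite nodup_In; symmetry; apply Ch; auto.
    + assert (length (nodup Req_dec_T F) <= 1)%nat; [|lia].
      apply (len_all_eq _ 0); [apply NoDup_nodup|].
      intros w; rewrite nodup_In; unfold F; rewrite in_map_iff.
      intros [p' [<- _]]; ring.
Qed.
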